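(* Let $p\neq2$ and let $A=\mathbb Z[S]$ be a commutative polynomial ring over a set $S$. Let $f_1,\dots,f_r$ be distinct nonzero elements of $A$ with $f_i\ne -f_j$ for all $i\ne j$. Then the elements $\langle f_1\rangle,\dots,\langle f_r\rangle$ of $X(A)$ are $\mathbb Z$-linearly independent.
   Context: For a commutative ring $B$, $V(b_0,b_1,\dots)=p(0,b_0,b_1,\dots)$ on $B^{\mathbb N_0}$, $\langle b\rangle=(b,b^p,b^{p^2},\dots)$, and $X(B)$ is the closed subgroup of $B^{\mathbb N_0}$ (product topology) generated by $\{V^n\langle b\rangle\mid n\ge0, b\in B\}$. *)

(* Defs.v *)
From HB Require Import structures.
From mathcomp Require Import all_boot all_order all_algebra.
From mathcomp Require Import monalg.
Set Implicit Arguments. Unset Strict Implicit. Unset Printing Implicit Defensive.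
Import GRing.Theory.
Local Open Scope ring_scope.

Definition polyZ (S : choiceType) := {malg int[{cmonom S}]}.

(* <b> = (b, b^p, b^(p^2), ...) as an element of B^{N_0}. *)
Definition teich (B : comNzRingType) (p : nat) (b : B) : nat -> B :=
  fun k => b ^+ (p ^ k).

(* Z-linear independence of a finite family in the additive group B^{N_0}
   (componentwise addition; X(B) is a subgroup of it). *)
Definition Zlin_indep (B : comNzRingType) (r : nat) (v : 'I_r -> nat -> B) : Prop :=
  forall n : 'I_r -> int,
    (forall k : nat, \sum_(i < r) (v i k) *~ (n i) = 0) -> forall i, n i = 0.

(* Main.v *)
From HB Require Import structures.
Require Import Defs.
From mathcomp Require Import all_boot all_order all_algebra finmap zify.
From mathcomp Require Import monalg.
Set Implicit Arguments. Unset Strict Implicit. Unset Printing Implicit Defensive.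
Import Order.TTheory GRing.Theory Num.Theory.
Local Open Scope ring_scope.

Definition code (S : choiceType) (V : seq S) (B : nat) (m : cmonom S) : nat :=
  (\sum_(s <- V) m s * B ^ (index s V))%N.

Definition hcode (S : choiceType) (V : seq S) (B N : nat) (m : cmonom S) : int :=
  (N%:Z) ^+ (code V B m).

Lemma hcode_mm (S : choiceType) (V : seq S) (B N : nat) : mmorphism (hcode V B N).
Proof.
split; last by rewrite /hcode /code big1 // => s _; rewrite cm1.
move=> x y; rewrite /hcode /code -exprD; congr (_ ^+ _).
by rewrite -big_split /=; apply: eq_bigr => s _; rewrite cmM mulnDl.
Qed.

HB.instance Definition _ (S : choiceType) (V : seq S) (B N : nat) :=
  monalg.isMultiplicative.Build (cmonom S) int (hcode V B N) (hcode_mm V B N).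

Definition phi (S : choiceType) (V : seq S) (B N : nat) (g : polyZ S) : int :=
  mmap idfun (hcode V B N) g.

Lemma phiX S V B N (g : polyZ S) m : phi V B N (g ^+ m) = phi V B N g ^+ m.
Proof. by rewrite /phi rmorphXn. Qed.
Lemma phi_sum S V B N r (F : 'I_r -> polyZ S) (n : 'I_r -> int) :
  phi V B N (\sum_i F i *~ n i) = \sum_i phi V B N (F i) *~ n i.
Proof. by rewrite /phi raddf_sum; apply: eq_bigr => i _; rewrite raddfMz. Qed.
Lemma phiB S V B N (g h : polyZ S) : phi V B N (g - h) = phi V B N g - phi V B N h.
Proof. by rewrite /phi raddfB. Qed.
Lemma phiD S V B N (g h : polyZ S) : phi V B N (g + h) = phi V B N g + phi V B N h.
Proof. by rewrite /phi raddfD. Qed.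
Lemma digits0 (T : eqType) (s : seq T) (e : T -> nat) (c : T -> int) (N : nat) :
  uniq s -> {in s &, injective e} -> (forall x, x \in s -> (`|c x| < N)%N) ->
  \sum_(x <- s) c x * (N%:Z) ^+ e x = 0 -> forall x, x \in s -> c x = 0.
Proof.
move=> us inj lt S0 x xs; apply/eqP/negPn/negP => cx.
have exP : exists n, has (fun y => (c y != 0) && (e y == n)) s.
  by exists (e x); apply/hasP; exists x => //; rewrite cx eqxx.
case: (ex_minnP exP) => n0 /hasP[x0 x0s /andP[cx0 /eqP ex0]] mn.
have Nge : (0 < N)%N by have := lt x0 x0s; case: (N).
have dvdR : (N%:Z ^+ n0.+1 %| \sum_(y <- s | y != x0) c y * N%:Z ^+ e y)%Z.
  rewrite big_seq_cond; apply: rpred_sum => y /andP[ys yx0].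
  have [->|cy] := eqVneq (c y) 0; first by rewrite mul0r dvdz0.
  apply: dvdz_mull; apply: dvdz_exp2l.
  have le : (n0 <= e y)%N by apply: mn; apply/hasP; exists y => //; rewrite cy eqxx.
  rewrite ltn_neqAle le andbT; apply/eqP => ey.
  by move: yx0; rewrite (inj y x0 ys x0s) ?eqxx // -ey ex0.
move: S0; rewrite (bigD1_seq x0) //= => /eqP; rewrite addr_eq0 => /eqP E.
have : (N%:Z ^+ n0.+1 %| c x0 * N%:Z ^+ n0)%Z by rewrite -ex0 E rpredN ex0.
rewrite exprS dvdz_mul2r; last by rewrite expf_neq0 // eqz_nat -lt0n.
have ca : (0 < `|c x0|)%N by rewrite absz_gt0.
rewrite dvdzE /= => /(dvdn_leq ca).
by rewrite leqNgt (lt x0 x0s).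
Qed.
Lemma grow_aux (b m : nat) : (b * (b + 1) ^ m >= (b + m) * b ^ m)%N.
Proof.
elim: m => [|m IH]; first by rewrite !expn0 !muln1 addn0.
rewrite !expnS.
have H : ((b + 1) * (b * (b + 1) ^ m) >= (b + 1) * ((b + m) * b ^ m))%N by rewrite leq_mul2l IH orbT.
set X := ((b + 1) ^ m)%N in H *; set Y := (b ^ m)%N in H *.
nia.
Qed.

Lemma grow (p C b : nat) : (1 < p)%N -> exists k, (C * b ^ (p ^ k) < (b + 1) ^ (p ^ k))%N.
Proof.
move=> hp; case: b => [|b].
  by exists 0%N; rewrite expn0 expn1 muln0.
exists (C * b.+1)%N; set m := (p ^ _)%N.
have hm : (C * b.+1 < m)%N by apply: ltn_expl.
have := grow_aux b.+1 m; set X := ((b.+1 + 1) ^ m)%N; set Y := (b.+1 ^ m)%N => H.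
have Yp : (0 < Y)%N by rewrite expn_gt0.
nia.
Qed.

Lemma PoszX (n m : nat) : ((n ^ m)%N)%:Z = (n%:Z) ^+ m.
Proof. by elim: m => [|m IH]; rewrite ?expn0 ?expr0 // expnS exprS PoszM IH. Qed.

Lemma Posz_sum r (F : 'I_r -> nat) : (\sum_i F i)%N%:Z = \sum_i (F i)%:Z.
Proof. exact: (big_morph Posz PoszD). Qed.

Lemma dom (p : nat) (hp : (1 < p)%N) r (a n : 'I_r -> int) :
  (forall i, a i != 0) -> (forall i j, i != j -> `|a i| != `|a j|) ->
  (forall k, \sum_i a i ^+ (p ^ k) * n i = 0) -> forall i, n i = 0.
Proof.
move=> a0 adist S i; apply/eqP/negPn/negP => ni.
have [i0 ni0 maxi0] := @arg_maxnP _ i (fun j => n j != 0) (fun j => `|a j|%N) ni.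
set b := (`|a i0| - 1)%N.
have Ab' : `|a i0|%N = (b + 1)%N by rewrite /b subnK // absz_gt0; exact: a0.
have Ab : `|a i0| = (b + 1)%:Z by rewrite -abszE Ab'.
have bj : forall j, j != i0 -> n j != 0 -> `|a j| <= b%:Z.
  move=> j ji0 nj; have le := maxi0 j nj; have ne := adist _ _ ji0.
  rewrite -!abszE eqz_nat in ne; rewrite -abszE lez_nat.
  move: le ne; rewrite Ab'; lia.
set C := (\sum_j `|n j|%N)%N.
have [k hk] := grow C b hp; set m := (p ^ k)%N in hk.
have := S k; rewrite (bigD1 i0) //= => /eqP; rewrite addr_eq0 => /eqP E.
have L1 : ((b + 1) ^ m)%N%:Z <= `|a i0 ^+ m * n i0|.
  rewrite normrM normrX Ab -PoszX -[X in X <= _]mulr1; apply: ler_wpM2l => //.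
  by rewrite -abszE lez_nat absz_gt0.
have L2 : `|a i0 ^+ m * n i0| <= (C * b ^ m)%N%:Z.
  rewrite E normrN; apply: (le_trans (ler_norm_sum _ _ _)).
  apply: (@le_trans _ _ (\sum_j (b ^ m)%N%:Z * `|n j|)).
    rewrite [X in _ <= X](bigD1 i0) //=; apply: ler_wpDl.
      by rewrite mulr_ge0.
    apply: ler_sum => j ji0; rewrite normrM normrX.
    have [->|nj] := eqVneq (n j) 0; first by rewrite normr0 !mulr0.
    apply: ler_wpM2r => //; rewrite PoszX; apply: lerXn2r => //.
    exact: bj.
  rewrite /C mulnC PoszM Posz_sum mulr_sumr; apply: ler_sum => j _.
  by rewrite abszE.
by have := le_trans L1 L2; rewrite lez_nat leqNgt hk.
Qed.

Lemma abszD_le (x y : int) : (`|(x + y)%R| <= `|x| + `|y|)%N.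
Proof. by rewrite -lez_nat PoszD !abszE ler_normD. Qed.

Lemma Posz_sum_seq (T : Type) (s : seq T) (F : T -> nat) :
  (\sum_(x <- s) F x)%N%:Z = \sum_(x <- s) (F x)%:Z.
Proof. exact: (big_morph Posz PoszD). Qed.

Theorem lemma4p2 (p : nat) (hp : prime p) (hp2 : p != 2%N)
  (S : choiceType) (r : nat) (f : 'I_r -> polyZ S)
  (hinj : injective f)
  (hnz : forall i, f i != 0)
  (hneg : forall i j, i != j -> f i != - f j) :
  Zlin_indep (fun i => teich p (f i)).
Proof.
move=> n Hs.
pose M : {fset cmonom S} := \big[@fsetU _/fset0]_(i <- index_enum (ordinal r)) msupp (f i).
have hM : forall i, (msupp (f i) `<=` M)%fset.
  by move=> i; apply: bigfcup_sup => //; rewrite mem_index_enum.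
pose V : seq S := undup (flatten (map (fun m : cmonom S => enum_fset (finsupp m)) (enum_fset M))).
have hV : forall m, m \in M -> forall s, s \in finsupp m -> s \in V.
  move=> m mM s sm; rewrite mem_undup; apply/flattenP.
  by exists (finsupp m : seq S) => //; apply/mapP; exists m.
pose B := (\max_(m <- enum_fset M) \max_(s <- V) m s).+1.
have hB : forall m, m \in M -> forall s, (m s < B)%N.
  move=> m mM s; rewrite ltnS.
  have [sm|sm] := boolP (s \in finsupp m); last first.
    by move: sm; rewrite -cmE_eq0 => /eqP ->.
  have h1 := @leq_bigmax_seq _ (enum_fset M) xpredT (fun m : cmonom S => \max_(s <- V) m s) m mM isT.
  have h2 := @leq_bigmax_seq _ V xpredT (fun s => m s) s (hV _ mM _ sm) isT.
  exact: leq_trans h2 h1.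
have hinjc : {in M &, injective (code V B)}.
  move=> m1 m2 m1M m2M ce; apply/eqP/cmP => s.
  have uV : uniq V by apply: undup_uniq.
  have iV : {in V &, injective (index^~ V)}.
    by move=> x y xV yV h; rewrite -(nth_index x xV) h nth_index.
  have bd : forall s, s \in V -> (`|((m1 s)%:Z - (m2 s)%:Z)%R| < B)%N.
    move=> t _; have := hB _ m1M t; have := hB _ m2M t.
    lia.
  have Hsum : \sum_(t <- V) ((m1 t)%:Z - (m2 t)%:Z) * (B%:Z) ^+ index t V = 0.
    rewrite (eq_bigr (fun t => (m1 t * B ^ index t V)%N%:Z - (m2 t * B ^ index t V)%N%:Z)); last first.
      by move=> t _; rewrite mulrBl !PoszM PoszX.
    rewrite sumrB -!Posz_sum_seq.
    by rewrite /code in ce; rewrite ce subrr.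
  have H := digits0 uV iV bd Hsum.
  have [sV|sV] := boolP (s \in V).
    by have := H s sV => /eqP; rewrite subr_eq0 eqz_nat => /eqP.
  have n1 : s \notin finsupp m1 by apply: contra sV; apply: hV.
  have n2 : s \notin finsupp m2 by apply: contra sV; apply: hV.
  by move: n1 n2; rewrite -!cmE_eq0 => /eqP -> /eqP ->.
pose Nm := (\max_(i < r) \max_(m <- enum_fset M) `|(f i)@_m|)%N.
pose N := (2 * Nm).+1.
have hN : forall i m, (`|(f i)@_m| <= Nm)%N.
  move=> i m; have [mM|mM] := boolP (m \in M); last first.
    rewrite mcoeff_outdom //; apply: contra mM; exact: (fsubsetP (hM i)).
  have h1 := @leq_bigmax_seq _ (enum_fset M) xpredT (fun m => `|(f i)@_m|%N) m mM isT.
  apply: (leq_trans h1); exact: (@leq_bigmax _ (fun i => \max_(m <- enum_fset M) `|(f i)@_m|)%N i).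
pose ph := phi V B N.
have key : forall g, (msupp g `<=` M)%fset -> (forall m, (`|g@_m| < N)%N) -> ph g = 0 -> g = 0.
  move=> g sub bnd ph0.
  have Hs0 : \sum_(m <- enum_fset M) g@_m * (N%:Z) ^+ code V B m = 0.
    by rewrite -[RHS]ph0 /ph /phi (mmapEw sub).
  have H := digits0 (fset_uniq M) hinjc (fun m _ => bnd m) Hs0.
  apply/malgP => m; rewrite mcoeff0.
  have [mM|mM] := boolP (m \in M); first exact: H.
  rewrite mcoeff_outdom //; apply: contra mM; exact: (fsubsetP sub).
have a0 : forall i, ph (f i) != 0.
  move=> i; apply/eqP => h; move/eqP: (hnz i); apply; apply: key h => // m.
  by rewrite /N ltnS (leq_trans (hN i m)) // leq_pmull.
have bd2 : forall i j m, (`|((f i)@_m + (f j)@_m)%R| < N)%N.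
  move=> i j m; rewrite /N ltnS mul2n -addnn.
  exact: leq_trans (abszD_le _ _) (leq_add (hN i m) (hN j m)).
have bd3 : forall i j m, (`|((f i)@_m - (f j)@_m)%R| < N)%N.
  move=> i j m; rewrite /N ltnS mul2n -addnn.
  apply: leq_trans (abszD_le _ _) _; rewrite abszN.
  exact: leq_add (hN i m) (hN j m).
have adist : forall i j, i != j -> `|ph (f i)| != `|ph (f j)|.
  move=> i j ij; rewrite eqr_norm2; apply/negP => /orP[] /eqP h.
    suff : f i - f j = 0 by move/eqP; rewrite subr_eq0 => /eqP /hinj /eqP; rewrite (negPf ij).
    apply: key; first by apply: fsubset_trans (msuppB_le _ _) _; rewrite fsubUset !hM.
      by move=> m; rewrite mcoeffB.
    by rewrite /ph in h *; rewrite phiB h subrr.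
  suff : f i + f j = 0 by move/eqP; rewrite addr_eq0 (negPf (hneg i j ij)).
  apply: key; first by apply: fsubset_trans (msuppD_le _ _) _; rewrite fsubUset !hM.
    by move=> m; rewrite mcoeffD.
  by rewrite /ph in h *; rewrite phiD h addNr.
apply: (dom (prime_gt1 hp) a0 adist) => k.
have := Hs k; rewrite /teich => /(congr1 ph); rewrite /ph phi_sum.
rewrite [phi V B N 0]/phi raddf0 => H; rewrite -[RHS]H; apply: eq_bigr => i _.
by rewrite phiX mulrzz.
Qed.
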